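(* Let $a,b,c,n$ be real constants with $a\neq 0$ and $n\neq 0$, and consider on the region of coordinates $(t,r,\phi,z)$ with $r>0$, $\phi$ periodic with period $2\pi$, the Lewis metric of the Weyl class $$ds^{2}=-f\,dt^{2}+2k\,dt\,d\phi+r^{(n^{2}-1)/2}(dr^{2}+dz^{2})+l\,d\phi^{2},$$ where $$f=ar^{1-n}-\frac{c^{2}r^{n+1}}{n^{2}a},\qquad C=\frac{cr^{n+1}}{naf}+b,\qquad k=-Cf,\qquad l=\frac{r^{2}}{f}-C^{2}f .$$ For a constant $\Omega$, introduce the coordinates $\bar{\phi}=\phi-\Omega t$, with $t,r,z$ unchanged. Then: (i) if $bc\neq n$ and $\Omega=c/(n-bc)$, the metric takes the form $$ds^{2}=-\bar{f}\,(dt+\bar{C}\,d\bar{\phi})^{2}+r^{(n^{2}-1)/2}(dr^{2}+dz^{2})+\frac{r^{2}}{\bar{f}}\,d\bar{\phi}^{2},$$ with $\bar{f}=r^{1-n}/\alpha$, $\bar{C}=b\,\frac{n-bc}{n}$ (a constant) and $\alpha=\frac{(n-bc)^{2}}{a n^{2}}$; in this case $\partial_t$ is timelike everywhere when $a>0$; (ii) if $b\neq 0$ and $\Omega=-1/b$, the metric takes the same form with $\bar{f}=r^{1+n}/\alpha$, $\alpha=-ab^{2}$, and $\bar{C}=-b\,\frac{n-bc}{n}$ (a constant); in this case $\partial_t$ is timelike everywhere when $a<0$. Moreover, in both cases, setting $\lambda_{\rm m}=(1-n)/4$ in case (i) and $\lambda_{\rm m}=(1+n)/4$ in case (ii), and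 $j=\tfrac14 b(n-bc)$ in both cases, the metric equals $$ds^{2}=-\frac{r^{4\lambda_{\rm m}}}{\alpha}\Big(dt-\frac{j}{\lambda_{\rm m}-1/4}\,d\bar{\phi}\Big)^{2}+r^{4\lambda_{\rm m}(2\lambda_{\rm m}-1)}(dr^{2}+dz^{2})+\alpha\, r^{2(1-2\lambda_{\rm m})}\,d\bar{\phi}^{2}.$$
   Context: Signature $(-+++)$. The metric is the general stationary cylindrically symmetric vacuum solution (Lewis metric) with all parameters real (Weyl class). The quantity $\lambda_{\rm m}$ is (as computed in the paper) the Komar integral of $\partial_t$ per unit $z$-length in the new coordinates and $j$ the Komar integral of $\partial_\phi$ per unit $z$-length; these interpretations are not needed for the claim. *)

(* Defs.v *)
(* concrete reals R, real powers via Rpower (defined for r > 0). *)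
From Stdlib Require Import Reals.
Open Scope R_scope.

Definition lewis_f (a c n r : R) : R :=
  a * Rpower r (1 - n) - c ^ 2 * Rpower r (n + 1) / (n ^ 2 * a).

Definition lewis_C (a b c n r : R) : R :=
  c * Rpower r (n + 1) / (n * a * lewis_f a c n r) + b.

Definition lewis_k (a b c n r : R) : R := - lewis_C a b c n r * lewis_f a c n r.

Definition lewis_l (a b c n r : R) : R :=
  r ^ 2 / lewis_f a c n r - (lewis_C a b c n r) ^ 2 * lewis_f a c n r.

(* line element ds^2 at radius r, evaluated on the coordinate differentials
   (dt, dr, dphi, dz) in the original coordinates (t, r, phi, z) *)
Definition lewis_metric (a b c n r dt dr dphi dz : R) : R :=
  - lewis_f a c n r * dt ^ 2 + 2 * lewis_k a b c n r * dt * dphi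
  + Rpower r ((n ^ 2 - 1) / 2) * (dr ^ 2 + dz ^ 2)
  + lewis_l a b c n r * dphi ^ 2.

(* the same line element expressed in the coordinates (t, r, phibar, z),
   phibar = phi - Om t, so dphi = dphibar + Om dt *)
Definition lewis_metric_rot (a b c n Om r dt dr dphib dz : R) : R :=
  lewis_metric a b c n r dt dr (dphib + Om * dt) dz.

Definition bar_metric (fb Cb n r dt dr dphib dz : R) : R :=
  - fb * (dt + Cb * dphib) ^ 2 + Rpower r ((n ^ 2 - 1) / 2) * (dr ^ 2 + dz ^ 2)
  + r ^ 2 / fb * dphib ^ 2.

Definition komar_metric (alpha lam j r dt dr dphib dz : R) : R :=
  - (Rpower r (4 * lam) / alpha) * (dt - j / (lam - 1 / 4) * dphib) ^ 2
  + Rpower r (4 * lam * (2 * lam - 1)) * (dr ^ 2 + dz ^ 2)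
  + alpha * Rpower r (2 * (1 - 2 * lam)) * dphib ^ 2.

(* Main.v *)
Require Import Defs.
From Stdlib Require Import Reals Lra Psatz.
Open Scope R_scope.
Lemma k1 (a b c n P Q dt dp : R) : a <> 0 -> n <> 0 -> n - b*c <> 0 -> P <> 0 -> Q <> 0 ->
  a * P * (n^2*a) - c^2*Q <> 0 ->
  let f := a * P - c ^ 2 * Q / (n ^ 2 * a) in
  let C := c * Q / (n * a * f) + b in
  let Om := c / (n - b*c) in
  let alpha := (n - b * c) ^ 2 / (a * n ^ 2) in
  let Cb := b * ((n - b * c) / n) in
  - f * dt^2 + 2 * (- C * f) * dt * (dp + Om*dt) + ((P*Q)/f - C^2*f) * (dp + Om*dt)^2
  = - (P/alpha) * (dt + Cb*dp)^2 + (P*Q)/(P/alpha) * dp^2.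
Proof.
intros ha hn hbc hP hQ hf f C Om alpha Cb.

unfold C, Om, alpha, Cb. unfold f in *. field; repeat split; auto.
Qed.
Lemma k2 (a b c n P Q dt dp : R) : a <> 0 -> n <> 0 -> b <> 0 -> P <> 0 -> Q <> 0 ->
  a * P * (n^2*a) - c^2*Q <> 0 ->
  let f := a * P - c ^ 2 * Q / (n ^ 2 * a) in
  let C := c * Q / (n * a * f) + b in
  let Om := -1 / b in
  let alpha := - a * b^2 in
  let Cb := - b * ((n - b * c) / n) in
  - f * dt^2 + 2 * (- C * f) * dt * (dp + Om*dt) + ((P*Q)/f - C^2*f) * (dp + Om*dt)^2
  = - (Q/alpha) * (dt + Cb*dp)^2 + (P*Q)/(Q/alpha) * dp^2.
Proof.
intros ha hn hbc hP hQ hf f C Om alpha Cb.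
unfold C, Om, alpha, Cb. unfold f in *. field; repeat split; auto.
Qed.
Lemma pow2_gt_0 (x : R) : x <> 0 -> 0 < x ^ 2.
Proof. intro h. simpl. rewrite Rmult_1_r. apply (Rsqr_pos_lt x h). Qed.

Lemma PQ (r n : R) : 0 < r -> Rpower r (1 - n) * Rpower r (n + 1) = r ^ 2.
Proof.
intro hr. rewrite <- Rpower_plus.
replace (1 - n + (n + 1)) with (INR 2) by (simpl; ring).
apply Rpower_pow; auto.
Qed.

Lemma Rp_pos (r x : R) : 0 < Rpower r x.
Proof. unfold Rpower. apply exp_pos. Qed.

Lemma Rp_ext (r x y : R) : x = y -> Rpower r x = Rpower r y.
Proof. intros ->; reflexivity. Qed.

Lemma fnz (a c n P Q : R) : a <> 0 -> n <> 0 -> a * P - c ^ 2 * Q / (n ^ 2 * a) <> 0 ->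
  a * P * (n^2*a) - c^2*Q <> 0.
Proof.
intros ha hn h H. apply h.
replace (a * P - c ^ 2 * Q / (n ^ 2 * a)) with ((a * P * (n^2*a) - c^2*Q) / (n^2*a))
  by (field; auto).
rewrite H. unfold Rdiv; ring.
Qed.

Theorem mainTheorem1 (a b c n : R) (ha : a <> 0) (hn : n <> 0) :
  (b * c <> n ->
    let Om := c / (n - b * c) in
    let alpha := (n - b * c) ^ 2 / (a * n ^ 2) in
    let Cb := b * ((n - b * c) / n) in
    let fb := fun r => Rpower r (1 - n) / alpha in
    let lam := (1 - n) / 4 in
    let j := 1 / 4 * b * (n - b * c) in
    (forall r dt dr dphib dz, 0 < r -> lewis_f a c n r <> 0 ->
       lewis_metric_rot a b c n Om r dt dr dphib dz
       = bar_metric (fb r) Cb n r dt dr dphib dz)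
    /\ (0 < a -> forall r, 0 < r -> bar_metric (fb r) Cb n r 1 0 0 0 < 0)
    /\ (forall r dt dr dphib dz, 0 < r -> lewis_f a c n r <> 0 ->
       lewis_metric_rot a b c n Om r dt dr dphib dz
       = komar_metric alpha lam j r dt dr dphib dz))
  /\
  (b <> 0 ->
    let Om := - 1 / b in
    let alpha := - a * b ^ 2 in
    let Cb := - b * ((n - b * c) / n) in
    let fb := fun r => Rpower r (1 + n) / alpha in
    let lam := (1 + n) / 4 in
    let j := 1 / 4 * b * (n - b * c) in
    (forall r dt dr dphib dz, 0 < r -> lewis_f a c n r <> 0 ->
       lewis_metric_rot a b c n Om r dt dr dphib dz
       = bar_metric (fb r) Cb n r dt dr dphib dz)
    /\ (a < 0 -> forall r, 0 < r -> bar_metric (fb r) Cb n r 1 0 0 0 < 0)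
    /\ (forall r dt dr dphib dz, 0 < r -> lewis_f a c n r <> 0 ->
       lewis_metric_rot a b c n Om r dt dr dphib dz
       = komar_metric alpha lam j r dt dr dphib dz)).
Proof.
split.
- intros hbc Om alpha Cb fb lam j.
  assert (hbc' : n - b * c <> 0) by (intro; apply hbc; lra).
  assert (E1 : forall r dt dr dphib dz, 0 < r -> lewis_f a c n r <> 0 ->
       lewis_metric_rot a b c n Om r dt dr dphib dz
       = bar_metric (fb r) Cb n r dt dr dphib dz).
  { intros r dt dr dphib dz hr hf.
    unfold lewis_metric_rot, lewis_metric, bar_metric, lewis_k, lewis_l, lewis_C, fb.
    unfold lewis_f in *.
    rewrite <- (PQ r n hr).
    replace (Rpower r (n+1)) with (Rpower r (1+n)) in * by (apply Rp_ext; ring).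
    pose proof (k1 a b c n (Rpower r (1 - n)) (Rpower r (1+n)) dt dphib ha hn hbc'
      (Rgt_not_eq _ _ (Rp_pos r _)) (Rgt_not_eq _ _ (Rp_pos r _)) (fnz _ _ _ _ _ ha hn hf)) as K.
    cbv zeta in K. unfold Om, alpha, Cb. set (X := Rpower r ((n ^ 2 - 1) / 2) * (dr ^ 2 + dz ^ 2)). lra. }
  split; [exact E1|split].
  + intros hapos r hr. unfold bar_metric, fb.
    assert (0 < alpha). { unfold alpha. apply Rdiv_lt_0_compat.
      - apply pow2_gt_0; auto.
      - apply Rmult_lt_0_compat; auto. apply pow2_gt_0; auto. }
    assert (0 < Rpower r (1 - n) / alpha) by (apply Rdiv_lt_0_compat; auto; apply Rp_pos).
    nra.
  + intros r dt dr dphib dz hr hf. rewrite E1 by auto.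
    unfold bar_metric, komar_metric, fb.
    rewrite (Rp_ext r (4*lam) (1-n)) by (unfold lam; field).
    rewrite (Rp_ext r (4 * lam * (2 * lam - 1)) ((n^2-1)/2)) by (unfold lam; field).
    rewrite (Rp_ext r (2 * (1 - 2 * lam)) (n+1)) by (unfold lam; field).
    rewrite <- (PQ r n hr).
    assert (hal : alpha <> 0). { unfold alpha. apply Rmult_integral_contrapositive; split.
      - apply pow_nonzero; auto.
      - apply Rinv_neq_0_compat. apply Rmult_integral_contrapositive; split; auto. apply pow_nonzero; auto. }
    pose proof (Rp_pos r (1-n)). pose proof (Rp_pos r (n+1)).
    replace (j / (lam - 1/4)) with (- Cb) by (unfold j, lam, Cb; field; repeat split; auto; intro; apply hn; lra).
    field. split; auto; lra.
- intros hb Om alpha Cb fb lam j.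
  assert (E1 : forall r dt dr dphib dz, 0 < r -> lewis_f a c n r <> 0 ->
       lewis_metric_rot a b c n Om r dt dr dphib dz
       = bar_metric (fb r) Cb n r dt dr dphib dz).
  { intros r dt dr dphib dz hr hf.
    unfold lewis_metric_rot, lewis_metric, bar_metric, lewis_k, lewis_l, lewis_C, fb.
    unfold lewis_f in *.
    rewrite <- (PQ r n hr).
    replace (Rpower r (n+1)) with (Rpower r (1+n)) in * by (apply Rp_ext; ring).
    pose proof (k2 a b c n (Rpower r (1 - n)) (Rpower r (1+n)) dt dphib ha hn hb
      (Rgt_not_eq _ _ (Rp_pos r _)) (Rgt_not_eq _ _ (Rp_pos r _)) (fnz _ _ _ _ _ ha hn hf)) as K.
    cbv zeta in K. unfold Om, alpha, Cb. set (X := Rpower r ((n ^ 2 - 1) / 2) * (dr ^ 2 + dz ^ 2)). lra. }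
  split; [exact E1|split].
  + intros hapos r hr. unfold bar_metric, fb.
    assert (0 < alpha). { unfold alpha.
      assert (0 < b^2) by (apply pow2_gt_0; auto). nra. }
    assert (0 < Rpower r (1 + n) / alpha) by (apply Rdiv_lt_0_compat; auto; apply Rp_pos).
    nra.
  + intros r dt dr dphib dz hr hf. rewrite E1 by auto.
    unfold bar_metric, komar_metric, fb.
    rewrite (Rp_ext r (4*lam) (1+n)) by (unfold lam; field).
    rewrite (Rp_ext r (4 * lam * (2 * lam - 1)) ((n^2-1)/2)) by (unfold lam; field).
    rewrite (Rp_ext r (2 * (1 - 2 * lam)) (1-n)) by (unfold lam; field).
    rewrite <- (PQ r n hr).
    replace (Rpower r (n+1)) with (Rpower r (1+n)) by (apply Rp_ext; ring).
    assert (hal : alpha <> 0). { unfold alpha.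
      assert (0 < b^2) by (apply pow2_gt_0; auto). intro HH.
      apply Rmult_integral in HH. destruct HH; [lra|lra]. }
    pose proof (Rp_pos r (1-n)). pose proof (Rp_pos r (1+n)).
    replace (j / (lam - 1/4)) with (- Cb) by (unfold j, lam, Cb; field; repeat split; auto; intro; apply hn; lra).
    field. split; auto; lra.
Qed.
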